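(* Let $A$ be an irreducible $\{0,1\}$-matrix which is not a permutation matrix, and let $\mathcal{C}$ be a right Markov code for $(X_A,\sigma_A)$. Then the one-sided topological Markov shift $(X_{A(\mathcal{C})},\sigma_{A(\mathcal{C})})$ is continuously orbit equivalent to $(X_A,\sigma_A)$.
   Context: For an $N\times N$ matrix $A=[A(i,j)]_{i,j=1}^N$ with entries in $\{0,1\}$, put $\Sigma_A=\{1,\dots,N\}$ and let $X_A$ be the set of sequences $(x_n)_{n\in\mathbb{N}}$ in $\Sigma_A$ with $A(x_n,x_{n+1})=1$ for all $n$, with the product topology and the shift $\sigma_A((x_n)_n)=(x_{n+1})_n$. $B_k(X_A)$ is the set of admissible words of length $k$, $B_0(X_A)$ the empty word, $B_*(X_A)=\bigcup_{k\ge0}B_k(X_A)$. For a word $w=w_1\cdots w_\ell$ put $\sigma_A(w)=w_2\cdots w_\ell$. A code is a nonempty $\mathcal{C}\subset B_*(X_A)$ such that any equality $\omega(i_1)\cdots\omega(i_k)=\omega(j_1)\cdots\omega(j_n)$ of concatenations of words of $\mathcal{C}$ forces $n=k$ and $\omega(i_m)=\omega(j_m)$ for all $m$; a prefix code is a code in which no word is a prefix of another. A finite prefix code $\mathcal{C}=\{\omega(1),\dots,\omega(M)\}\subset B_*(X_A)$, $\Sigma_{A(\mathcal{C})}=\{1,\dots,M\}$, is a right Markov code for $(X_A,\sigma_A)$ if: (i) for every $\gamma\in B_*(X_A)$ there is $\eta\in B_*(X_A)$ with $\gamma\eta\in B_*(X_A)$ and a unique finite sequence $(i_1,\dots,i_k)$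 in $\Sigma_{A(\mathcal{C})}$ with $\gamma\eta=\omega(i_1)\cdots\omega(i_k)$; (ii) there is $L\in\mathbb{N}$ such that for all $i_1,\dots,i_L\in\Sigma_{A(\mathcal{C})}$ with $\omega(i_1)\cdots\omega(i_L)\in B_*(X_A)$ there exist $j_1,\dots,j_k\in\Sigma_{A(\mathcal{C})}$ with $\sigma_A(\omega(i_1))\omega(i_2)\cdots\omega(i_L)=\omega(j_1)\cdots\omega(j_k)$; (iii) for every $i,j$ there are $n_1,\dots,n_l\in\Sigma_{A(\mathcal{C})}$ with $\omega(i)\omega(n_1)\cdots\omega(n_l)\omega(j)\in B_*(X_A)$. $A(\mathcal{C})$ is the $M\times M$ matrix with $A(\mathcal{C})(i,j)=A(r(\omega(i)),s(\omega(j)))$, where $s(\omega(i)),r(\omega(i))$ denote the first and last symbols of $\omega(i)$. $(X_A,\sigma_A)$ and $(X_B,\sigma_B)$ are continuously orbit equivalent if there exist a homeomorphism $h:X_A\to X_B$ and continuous maps $k_1,l_1:X_A\to\mathbb{Z}_+$, $k_2,l_2:X_B\to\mathbb{Z}_+$ with $\sigma_B^{k_1(x)}(h(\sigma_A(x)))=\sigma_B^{l_1(x)}(h(x))$ for $x\in X_A$ and $\sigma_A^{k_2(y)}(h^{-1}(\sigma_B(y)))=\sigma_A^{l_2(y)}(h^{-1}(y))$ for $y\in X_B$. *)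

(* Defs.v *)
From HB Require Import structures.
From mathcomp Require Import all_boot all_order all_algebra.
From mathcomp Require Import all_classical all_reals.
From mathcomp Require Import topology_structure discrete_topology nat_topology
  function_spaces subspace_topology.
Set Implicit Arguments. Unset Strict Implicit. Unset Printing Implicit Defensive.
Import GRing.Theory Num.Theory.
Local Open Scope classical_set_scope.
Local Open Scope ring_scope.

Definition zero_one_mx (N : nat) (A : 'M[int]_N) : Prop :=
  forall i j, A i j = 0 \/ A i j = 1.

Definition irreducible_mx (N : nat) (A : 'M[int]_N) : Prop :=
  forall i j : 'I_N, exists n : nat, (0 < n)%N /\ 0 < (A ^+ n) i j.

Notation alph N := (discrete_topology (ordinal N)).
Notation seqsp N := {ptws nat -> alph N}.

Definition X_ (N : nat) (A : 'M[int]_N) : set (seqsp N) :=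
  [set x | forall n : nat, A (x n) (x n.+1) = 1].

Definition shift (N : nat) (x : seqsp N) : seqsp N := fun n => x n.+1.
Definition shiftn (N : nat) (k : nat) (x : seqsp N) : seqsp N :=
  fun n => x (n + k)%N.

(* Admissible words B_*(X_A): the empty word, and the words that occur
   (as initial blocks, X_A being shift invariant) in points of X_A. *)
Definition admissible (N : nat) (A : 'M[int]_N) (w : seq 'I_N) : Prop :=
  w = [::] \/ exists x, X_ A x /\ w = mkseq (fun n => (x n : 'I_N)) (size w).

Definition concat (N M : nat) (omega : 'I_M -> seq 'I_N) (s : seq 'I_M)
  : seq 'I_N := flatten (map omega s).

Definition wshift (N : nat) (w : seq 'I_N) : seq 'I_N := behead w.

Definition is_code (N M : nat) (A : 'M[int]_N) (omega : 'I_M -> seq 'I_N)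
  : Prop :=
  [/\ (0 < M)%N, injective omega,
      (forall i, admissible A (omega i)) &
      (forall s t : seq 'I_M, concat omega s = concat omega t ->
          map omega s = map omega t)].

Definition is_prefix_code (N M : nat) (A : 'M[int]_N)
  (omega : 'I_M -> seq 'I_N) : Prop :=
  is_code A omega /\
  (forall i j : 'I_M, i != j -> ~~ prefix (omega i) (omega j)).

Definition right_Markov_code (N M : nat) (A : 'M[int]_N)
  (omega : 'I_M -> seq 'I_N) : Prop :=
  [/\ is_prefix_code A omega,
   (* (i) *)
   (forall gamma, admissible A gamma ->
      exists eta, admissible A eta /\ admissible A (gamma ++ eta) /\
        exists s : seq 'I_M, gamma ++ eta = concat omega s /\
          forall t : seq 'I_M, gamma ++ eta = concat omega t -> t = s),
   (* (ii) *)
   (exists L : nat, (0 < L)%N /\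
      forall s : seq 'I_M, size s = L -> admissible A (concat omega s) ->
        exists t : seq 'I_M,
          wshift (concat omega s) = concat omega t) &
   (* (iii) *)
   (forall i j : 'I_M, exists ns : seq 'I_M,
      admissible A (omega i ++ concat omega ns ++ omega j))].

(* A(C)(i,j) = A(r(omega(i)), s(omega(j))), r = last symbol, s = first
   symbol (code words are nonempty; the value 0 for empty words is
   irrelevant). *)
Definition code_mx (N M : nat) (A : 'M[int]_N) (omega : 'I_M -> seq 'I_N)
  : 'M[int]_M :=
  \matrix_(i, j)
    match omega i, omega j with
    | a :: r, b :: _ => A (last a r) b
    | _, _ => 0
    end.

Definition coe (N M : nat) (A : 'M[int]_N) (B : 'M[int]_M) : Prop :=
  exists (h : seqsp N -> seqsp M) (g : seqsp M -> seqsp N)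
         (k1 l1 : seqsp N -> nat) (k2 l2 : seqsp M -> nat),
    [/\ (forall x, X_ A x -> X_ B (h x)) /\ (forall y, X_ B y -> X_ A (g y)),
        (forall x, X_ A x -> g (h x) = x) /\ (forall y, X_ B y -> h (g y) = y),
        {within X_ A, continuous h} /\ {within X_ B, continuous g},
        ({within X_ A, continuous k1} /\ {within X_ A, continuous l1}) /\
        ({within X_ B, continuous k2} /\ {within X_ B, continuous l2}) &
        (forall x, X_ A x ->
           shiftn (k1 x) (h (shift x)) = shiftn (l1 x) (h x)) /\
        (forall y, X_ B y ->
           shiftn (k2 y) (g (shift y)) = shiftn (l2 y) (g y))].

(* Main.v *)
Require Import Defs.
From mathcomp Require Import all_boot all_order all_algebra.
From mathcomp Require Import all_classical all_reals.
From mathcomp Require Import topology_structure discrete_topology nat_topology function_spaces subspace_topology.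
From mathcomp Require Import zify.
Set Implicit Arguments. Unset Strict Implicit. Unset Printing Implicit Defensive.
Section Topo.
Local Open Scope classical_set_scope.


Lemma nbhs_agree N (x : seqsp N) B :
  nbhs x [set z : seqsp N | forall j, (j < B)%N -> z j = x j].
Proof.
elim: B => [|B IH]; first by apply: filterS filterT => z _ j.
have H1 : nbhs x [set z : seqsp N | z B = x B].
  have := @proj_continuous nat (fun _ => alph N) B x [set x B] (discrete_set1 _).
  by [].
apply: filterS (filterI IH H1) => z [h1 h2] j; rewrite ltnS leq_eqVlt.
by case/orP => [/eqP -> //|]; exact: h1.
Qed.

Lemma fd_cont_disc N (Y : discreteTopologicalType) (f : seqsp N -> Y) :
  (forall x : seqsp N, exists B, forall z : seqsp N,
     (forall j, (j < B)%N -> z j = x j) -> f z = f x) -> continuous f.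
Proof.
move=> H x; apply/discrete_cvg; first by apply: fmap_filter; apply: nbhs_filter. have [B HB] := H x.
by apply: filterS (nbhs_agree x B) => z /HB.
Qed.

Lemma fd_cont_seq N M (f : seqsp N -> seqsp M) :
  (forall n (x : seqsp N), exists B, forall z : seqsp N,
     (forall j, (j < B)%N -> z j = x j) -> f z n = f x n) -> continuous f.
Proof.
move=> H x.
have FF : Filter (f @ x) by apply: fmap_filter; apply: nbhs_filter.
apply/(pointwise_cvgP _ FF) => n.
apply/discrete_cvg; have [B HB] := H n x.
by apply: filterS (nbhs_agree x B) => z /HB.
Qed.

End Topo.

Lemma mkseq_add (T : Type) (f : nat -> T) a b :
  mkseq f (a + b) = mkseq f a ++ mkseq (fun k => f (a + k)) b.
Proof.
elim: b => [|b IH]; first by rewrite addn0 cats0.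
by rewrite addnS !mkseqS IH rcons_cat.
Qed.

Lemma take_mkseq' (T : Type) (f : nat -> T) a b :
  (a <= b)%N -> take a (mkseq f b) = mkseq f a.
Proof. by move=> h; rewrite -(subnKC h) mkseq_add take_size_cat ?size_mkseq. Qed.

Lemma mkseq_agree (T : Type) (f g : nat -> T) n :
  (forall j, (j < n)%N -> f j = g j) -> mkseq f n = mkseq g n.
Proof.
elim: n => // n IH H; rewrite !mkseqS IH ?H // => j hj; apply: H; lia.
Qed.

Lemma cat_prefix_cmp (T : eqType) (a b x y : seq T) :
  a ++ x = b ++ y -> prefix a b || prefix b a.
Proof.
wlog Hs : a b x y / (size a <= size b)%N.
  move=> H E; case: (leqP (size a) (size b)) => h; first exact: H E.
  by rewrite orbC; apply: (H b a y x) => //; exact: ltnW.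
move=> E; apply/orP; left; rewrite prefixE.
have := congr1 (take (size a)) E; rewrite take_size_cat // takel_cat // => <-.
by [].
Qed.

Section Comb.
Variables (N M : nat) (w : 'I_M -> seq 'I_N) (d : 'I_N) (u0 : 'I_M).
Hypothesis wne : forall u, (0 < size (w u))%N.
Hypothesis wpre : forall u v : 'I_M, u != v -> ~~ prefix (w u) (w v).

Local Notation cw := (concat w).

Lemma cw_cons u s : cw (u :: s) = w u ++ cw s. Proof. by []. Qed.
Lemma cw1 u : cw [:: u] = w u. Proof. by rewrite /concat /= cats0. Qed.
Lemma cw_cat s t : cw (s ++ t) = cw s ++ cw t.
Proof. by rewrite /concat map_cat flatten_cat. Qed.
Lemma size_cw s : (size s <= size (cw s))%N.
Proof.
elim: s => //= u s IH; rewrite cw_cons size_cat; have := wne u; lia.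
Qed.

Definition hh (i : nat -> 'I_M) (n : nat) : 'I_N := nth d (cw (mkseq i n.+1)) n.

Lemma hh_nth i m n : (n < size (cw (mkseq i m)))%N ->
  hh i n = nth d (cw (mkseq i m)) n.
Proof.
move=> Hn; rewrite /hh; case: (leqP m n.+1) => Hm.
  by rewrite -(subnKC Hm) mkseq_add cw_cat nth_cat Hn.
rewrite -(subnKC (ltnW Hm)) mkseq_add cw_cat nth_cat.
have -> // : (n < size (cw (mkseq i n.+1)))%N.
by apply: leq_trans (size_cw _); rewrite size_mkseq.
Qed.

Lemma hh_prefix i m : mkseq (hh i) (size (cw (mkseq i m))) = cw (mkseq i m).
Proof.
apply: (@eq_from_nth _ d); rewrite size_mkseq // => t Ht.
by rewrite nth_mkseq // (hh_nth Ht).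
Qed.

Definition sapp (s : seq 'I_M) (i : nat -> 'I_M) : nat -> 'I_M :=
  fun n => if (n < size s)%N then nth (i 0%N) s n else i (n - size s)%N.

Lemma mkseq_sapp s i m : mkseq (sapp s i) (size s + m) = s ++ mkseq i m.
Proof.
rewrite mkseq_add; congr (_ ++ _).
  apply: (@eq_from_nth _ (i 0%N)); rewrite size_mkseq // => k Hk.
  by rewrite nth_mkseq // /sapp Hk.
by apply: eq_mkseq => k; rewrite /sapp ltnNge leq_addr /= addKn.
Qed.

Lemma hh_sapp s i n : hh (sapp s i) n =
  if (n < size (cw s))%N then nth d (cw s) n else hh i (n - size (cw s)).
Proof.
have Hb : (n < size (cw (mkseq (sapp s i) (size s + n.+1))))%N.
  rewrite mkseq_sapp cw_cat size_cat.
  have := size_cw (mkseq i n.+1); rewrite size_mkseq; lia.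
rewrite (hh_nth Hb) mkseq_sapp cw_cat nth_cat; case: ifP => // Hn.
rewrite (@hh_nth i n.+1 (n - size (cw s))) //.
have := size_cw (mkseq i n.+1); rewrite size_mkseq; lia.
Qed.

Lemma hh_ext i j : i =1 j -> hh i = hh j.
Proof. by move=> H; apply: funext => n; rewrite /hh (eq_mkseq H). Qed.

Definition shf (k : nat) (i : nat -> 'I_M) : nat -> 'I_M := fun n => i (n + k)%N.

Lemma sapp_take i L : i =1 sapp (mkseq i L) (shf L i).
Proof.
move=> n; rewrite /sapp size_mkseq; case: ltnP => H; first by rewrite nth_mkseq.
by rewrite /shf subnK.
Qed.

Lemma hh_shift_gen i L n : hh i n =
  if (n < size (cw (mkseq i L)))%N then nth d (cw (mkseq i L)) n
  else hh (shf L i) (n - size (cw (mkseq i L))).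
Proof. by rewrite (hh_ext (sapp_take i L)) hh_sapp. Qed.

Lemma hh_shift1 i n : hh (fun k => i k.+1) n = hh i (n + size (w (i 0%N))).
Proof.
rewrite (hh_shift_gen i 1) /= cw1 ltnNge leq_addl /= addnK.
by congr hh; apply: funext => k; rewrite /shf addn1.
Qed.

Definition mt (y : nat -> 'I_N) p (a : seq 'I_N) : bool :=
  a == mkseq (fun t => y (p + t)%N) (size a).

Lemma mt_uniq y p u v : mt y p (w u) -> mt y p (w v) -> u = v.
Proof.
wlog Hs : u v / (size (w u) <= size (w v))%N.
  move=> H Hu Hv; case: (leqP (size (w u)) (size (w v))) => h; first exact: H.
  by symmetry; apply: H => //; exact: ltnW.
move=> /eqP Hu /eqP Hv; apply/eqP; apply: contraT => Huv.
have := wpre Huv; rewrite prefixE Hv take_mkseq' // -Hu eqxx.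
by [].
Qed.

Lemma parse_pre s0 s r : cw s = cw s0 ++ r -> exists s', s = s0 ++ s'.
Proof.
elim: s0 s => [|u s0 IH] s H; first by exists s.
case: s H => [|v s] H.
  move/(congr1 size): H; rewrite cw_cons /= !size_cat; have := wne u; lia.
rewrite !cw_cons -catA in H.
have Euv : v = u.
  have := cat_prefix_cmp H; apply: contraTeq => nuv.
  by rewrite negb_or wpre // wpre // eq_sym.
subst v; have := congr1 (drop (size (w u))) H; rewrite !drop_size_cat // => /IH.
by case=> s' ->; exists s'.
Qed.

Definition Lmax := (\max_(u : 'I_M) size (w u))%N.

Definition dec (y : nat -> 'I_N) p : 'I_M := odflt u0 [pick u | mt y p (w u)].
Fixpoint dpos y k := if k is k'.+1 then (dpos y k' + size (w (dec y (dpos y k'))))%N else 0%N.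
Definition gd (y : nat -> 'I_N) : nat -> 'I_M := fun k => dec y (dpos y k).

Lemma dec_mt y p u : mt y p (w u) -> dec y p = u.
Proof.
move=> H; rewrite /dec; case: pickP => [v Hv|/(_ u)]; first exact: mt_uniq Hv H.
by rewrite H.
Qed.

Lemma mt_hh j k : mt (hh j) (size (cw (mkseq j k))) (w (j k)).
Proof.
have E : cw (mkseq j k.+1) = cw (mkseq j k) ++ w (j k).
  by rewrite mkseqS -cats1 cw_cat cw1.
apply/eqP; apply: (@eq_from_nth _ d); first by rewrite (size_mkseq (fun t : nat => hh j (size (cw (mkseq j k)) + t))).
move=> t Ht; rewrite nth_mkseq // (@hh_nth j k.+1); last by rewrite E size_cat ltn_add2l.
by rewrite E nth_cat ltnNge leq_addr /= addKn.
Qed.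

Lemma dpos_hh j k : dpos (hh j) k = size (cw (mkseq j k)).
Proof.
elim: k => //= k IH; rewrite IH (dec_mt (mt_hh j k)).
by rewrite mkseqS -cats1 cw_cat cw1 size_cat.
Qed.

Lemma gd_hh j : gd (hh j) = j.
Proof. by apply: funext => k; rewrite /gd dpos_hh; exact: dec_mt (mt_hh j k). Qed.

Lemma Lmax_ge u : (size (w u) <= Lmax)%N.
Proof. exact: (leq_bigmax u). Qed.

Lemma dpos_ge y k : (k <= dpos y k)%N.
Proof. elim: k => //= k IH; have := wne (dec y (dpos y k)); lia. Qed.

Lemma dpos_le y k : (dpos y k <= k * Lmax)%N.
Proof. elim: k => //= k IH; have := Lmax_ge (dec y (dpos y k)); rewrite mulSn; lia. Qed.

Lemma hh_gd y : (forall n, exists s r, cw s = mkseq y n ++ r) -> hh (gd y) = y.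
Proof.
move=> Hy.
have key : forall k, cw (mkseq (gd y) k) = mkseq y (dpos y k).
  elim=> // k IH; set p := dpos y k.
  have [s [r Hs]] := Hy (p + Lmax)%N.
  rewrite mkseq_add -IH -catA in Hs.
  have [s' Es] := parse_pre Hs; subst s.
  rewrite cw_cat in Hs; have := congr1 (drop (size (cw (mkseq (gd y) k)))) Hs.
  rewrite !drop_size_cat // => {}Hs.
  case: s' Hs => [|u s''] Hs.
    move/(congr1 size): Hs; rewrite /= size_cat size_mkseq; have := Lmax_ge u0; have := wne u0; lia.
  rewrite cw_cons in Hs.
  have Hm : mt y p (w u).
    apply/eqP; have := congr1 (take (size (w u))) Hs.
    rewrite take_size_cat // takel_cat ?size_mkseq ?Lmax_ge // take_mkseq' //.
    exact: Lmax_ge.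
  rewrite mkseqS -cats1 cw_cat IH cw1 /= /gd -/p (dec_mt Hm) mkseq_add.
  by rewrite -(eqP Hm).
apply: funext => n; rewrite (@hh_nth _ n.+1) key ?size_mkseq ?nth_mkseq //.
  exact: dpos_ge.
exact: dpos_ge.
Qed.

Lemma dec_agree y y' p : (forall t, (t < Lmax)%N -> y (p + t)%N = y' (p + t)%N) ->
  dec y p = dec y' p.
Proof.
move=> H; rewrite /dec; congr odflt; apply: eq_pick => u; rewrite /mt.
rewrite (@mkseq_agree _ _ (fun t => y' (p + t)%N)) // => j hj; apply: H.
exact: leq_trans hj (Lmax_ge u).
Qed.

Lemma dpos_agree y y' k : (forall j, (j < k * Lmax)%N -> y j = y' j) ->
  dpos y k = dpos y' k.
Proof.
elim: k => //= k IH H.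
have e : dpos y k = dpos y' k.
  by apply: IH => j hj; apply: H; rewrite mulSn; lia.
rewrite e (@dec_agree y y') // => t ht; apply: H.
have := dpos_le y' k; rewrite mulSn; lia.
Qed.

Lemma gd_agree y y' k : (forall j, (j < k.+1 * Lmax)%N -> y j = y' j) ->
  gd y k = gd y' k.
Proof.
move=> H; rewrite /gd (@dpos_agree y y' k); last first.
  by move=> j hj; apply: H; rewrite mulSn; lia.
apply: dec_agree => t ht; apply: H; have := dpos_le y' k; rewrite mulSn; lia.
Qed.

End Comb.

Section XC.
Variables (N M : nat) (A : 'M[int]_N) (w : 'I_M -> seq 'I_N) (d : 'I_N) (u0 : 'I_M).
Hypothesis wne : forall u, (0 < size (w u))%N.
Local Notation e := (fun a b : 'I_N => A a b == 1%R).
Hypothesis wadm : forall u, sorted e (w u).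
Local Notation cw := (concat w).

Lemma ok_cw s : sorted (fun u v => code_mx A w u v == 1%R) s = sorted e (cw s).
Proof.
elim: s => // u s IH; case: s IH => [|v s] IH; first by rewrite cw1 wadm.
rewrite [LHS]/= -/(sorted _ (v :: s)) IH !cw_cons mxE.
have := wadm u; have := wne u; have := wne v.
case: (w u) => [|a r] //; case: (w v) => [|b r'] //= _ _ Hu.
by rewrite [in RHS]cat_path Hu /=.
Qed.

Lemma X_hh i : X_ (code_mx A w) i -> X_ A (hh w d i).
Proof.
move=> Hi n.
have Hs : sorted e (cw (mkseq i n.+2)).
  rewrite -ok_cw; apply/(sortedP u0) => k; rewrite size_mkseq => hk.
  rewrite !nth_mkseq //; try lia; apply/eqP; exact: Hi.
have hsz : (n.+2 <= size (cw (mkseq i n.+2)))%N.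
  by have := size_cw wne (mkseq i n.+2); rewrite size_mkseq.
move/(sortedP d): Hs => /(_ n hsz).
rewrite -(@hh_nth _ _ w d wne i n.+2 n) -?(@hh_nth _ _ w d wne i n.+2 n.+1); try (exact: hsz); try (exact: ltnW hsz).
by move/eqP.
Qed.

Lemma hh_X i : X_ A (hh w d i) -> X_ (code_mx A w) i.
Proof.
move=> H k.
have hsz : (k.+2 <= size (cw (mkseq i k.+2)))%N.
  by have := size_cw wne (mkseq i k.+2); rewrite size_mkseq.
have Hs : sorted e (cw (mkseq i k.+2)).
  apply/(sortedP d) => t ht.
  rewrite -(@hh_nth _ _ w d wne i k.+2 t) -?(@hh_nth _ _ w d wne i k.+2 t.+1); try lia.
  by apply/eqP; exact: H.
rewrite -ok_cw in Hs; move/(sortedP u0): Hs => /(_ k); rewrite size_mkseq !nth_mkseq //.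
by move=> /(_ (ltnSn _))/eqP.
Qed.

End XC.


Local Open Scope ring_scope.

Theorem mainTheorem2 (N : nat) (A : 'M[int]_N) (M : nat)
  (omega : 'I_M -> seq 'I_N) :
  zero_one_mx A -> irreducible_mx A -> ~ is_perm_mx A ->
  right_Markov_code A omega ->
  coe (code_mx A omega) A.
Proof.
move=> _ _ _ [[[M0 _ wadm0 wcode] wpre] Hi [L [L0 HL]] _].
have wne : forall u, (0 < size (omega u))%N.
  move=> u; case E: (omega u) => [|a r] //.
  have := wcode [:: u] [::]; rewrite /concat /= E => /(_ erefl) /=.
  by [].
pose u0 : 'I_M := Ordinal M0.
have [d _] : exists d : 'I_N, True.
  by case: (omega u0) (wne u0) => [|a r] //= _; exists a.
have wadm : forall u, sorted (fun a b : 'I_N => A a b == 1) (omega u).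
  move=> u; case: (wadm0 u) => [E|[x [Hx E]]]; first by have := wne u; rewrite E.
  apply/(sortedP d) => k hk; rewrite E !nth_mkseq //; try lia.
  by apply/eqP; exact: Hx.
have [tf Htf] : exists tf : seq 'I_M -> seq 'I_M, forall s, size s = L ->
    admissible A (concat omega s) -> wshift (concat omega s) = concat omega (tf s).
  have Hex : forall s : seq 'I_M, exists t : seq 'I_M, (size s = L ->
    admissible A (concat omega s) -> wshift (concat omega s) = concat omega t).
    move=> s; case: (pselect (size s = L /\ admissible A (concat omega s))) => [[h1 h2]|h].
      by have [t ht] := HL s h1 h2; exists t.
    by exists [::] => h1 h2; exfalso; exact: h (conj h1 h2).
  by have [f Hf] := choice Hex; exists f.
have Hdec : forall y : seqsp N, X_ A y -> forall n, exists s r, concat omega s = mkseq y n ++ r.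
  move=> y Hy n.
  have Ha : admissible A (mkseq y n) by right; exists y; rewrite size_mkseq.
  have [eta [_ [_ [s [Hs _]]]]] := Hi _ Ha.
  by exists s, eta.
exists (hh omega d), (gd omega u0), (fun _ => 0%N), (fun x => size (omega (x 0%N))),
  (fun y => size (tf (mkseq (gd omega u0 y) L))), (fun _ => L).
split.
- split; first by move=> x Hx; exact: (X_hh d u0 wne wadm).
  by move=> y Hy; apply: (@hh_X _ _ A omega d u0 wne wadm); rewrite (hh_gd d u0 wne wpre) //; exact: Hdec.
- split; first by move=> x _; exact: (gd_hh d u0 wne wpre).
  by move=> y Hy; apply: (hh_gd d u0 wne wpre); exact: Hdec.
- split; apply: continuous_subspaceT; apply: fd_cont_seq.
    by move=> n x; exists n.+1 => z Hz; rewrite /hh (mkseq_agree Hz).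
  by move=> k y; exists (k.+1 * Lmax omega)%N => z Hz; exact: (gd_agree u0).
- split; split; apply: continuous_subspaceT; try apply: cst_continuous; apply: fd_cont_disc.
    by move=> x; exists 1%N => z Hz; rewrite Hz.
  move=> y; exists (L * Lmax omega)%N => z Hz.
  rewrite (@mkseq_agree _ (gd omega u0 z) (gd omega u0 y)) // => k hk.
  apply: (gd_agree u0) => j hj; apply: Hz; apply: leq_trans hj _; exact: leq_mul.
- split.
    move=> x _; apply: funext => n; rewrite /shiftn addn0.
    exact: (hh_shift1 d wne).
move=> y Hy; set i := gd omega u0 y.
have Hy' : hh omega d i = y by exact: (hh_gd d u0 wne wpre (Hdec y Hy)).
set s := mkseq i L.
have Hadm : admissible A (concat omega s).
  right; exists y; split => //.
  by rewrite -Hy' (hh_prefix d wne).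
have ht := Htf s (size_mkseq _ _) Hadm.
have hS : (0 < size (concat omega s))%N.
  by apply: leq_trans (size_cw wne s); rewrite size_mkseq.
have Hc : shift y = hh omega d (sapp (tf s) (shf L i)).
  apply: funext => n; rewrite /shift -{1}Hy' (hh_shift_gen d wne i L n.+1) (hh_sapp d wne).
  rewrite -/s -ht /wshift size_behead nth_behead.
  case: ltnP => h1; case: ltnP => h2 //; try lia.
  by congr hh; lia.
have E : gd omega u0 (shift y) = sapp (tf s) (shf L i).
  by rewrite Hc (gd_hh d u0 wne wpre).
apply: funext => n; rewrite /shiftn E /sapp ltnNge leq_addl /= addnK.
by [].
Qed.
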